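(* For every integer $m\geq 2$ and every integer $n\geq 2$, the graph $mB_n$ (the disjoint union of $m$ copies of the book graph $B_n$) is $C_4$-supermagic.
   Context: All graphs are finite and simple. For a graph $H$, a graph $G=(V,E)$ has an $H$-covering if every edge of $G$ belongs to a subgraph of $G$ isomorphic to $H$. For such $G$, an $H$-magic labeling is a bijection $\lambda: V\cup E\to\{1,2,\dots,|V|+|E|\}$ for which there is a constant $c$ such that for every subgraph $H'=(V',E')$ of $G$ isomorphic to $H$, $\sum_{v\in V'}\lambda(v)+\sum_{e\in E'}\lambda(e)=c$. It is $H$-supermagic if moreover $\{\lambda(v):v\in V\}=\{1,\dots,|V|\}$; $G$ is $H$-supermagic if it admits such a labeling. $C_k$ is the cycle of length $k$. $mG$ denotes the disjoint union of $m$ copies of $G$. The book graph $B_n=K_{1,n}\times K_2$ has vertices $u_1,u_2,v_i,w_i$ ($1\le i\le n$) and edges $u_1u_2$, and $u_1w_i$, $u_2v_i$, $v_iw_i$ ($1\le i\le n$). *)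

(* Defs.v *)
From mathcomp Require Import all_boot.
Set Implicit Arguments. Unset Strict Implicit. Unset Printing Implicit Defensive.

(* A finite simple graph: a vertex finType T with a symmetric irreflexive
   adjacency relation e.  Edges are the 2-element sets {x,y} with e x y. *)
Definition edges (T : finType) (e : rel T) : {set {set T}} :=
  [set A : {set T} | [exists x, exists y, e x y && (A == [set x; y])]].

Definition iso_subgraph (TH : finType) (eH : rel TH) (T : finType) (e : rel T)
    (V' : {set T}) (E' : {set {set T}}) : Prop :=
  E' \subset edges e /\
  exists phi : TH -> T, injective phi /\ V' = phi @: [set: TH] /\
    E' = ((fun A : {set TH} => phi @: A) @: edges eH).

Definition H_covering (TH : finType) (eH : rel TH) (T : finType) (e : rel T) : Prop :=
  forall A, A \in edges e ->
    exists V' E', iso_subgraph eH e V' E' /\ A \in E'.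

(* An H-supermagic labeling, given by vertex labels lv and edge labels le:
   together a bijection V u E -> {1..|V|+|E|} (injective with values in that
   range, both sides having |V|+|E| elements), vertex labels exactly
   {1..|V|}, and constant total weight on all subgraphs isomorphic to H. *)
Definition H_supermagic_labeling (TH : finType) (eH : rel TH) (T : finType) (e : rel T)
    (lv : T -> nat) (le : {set T} -> nat) : Prop :=
  let N := #|T| + #|edges e| in
  injective lv /\
  {in edges e &, injective le} /\
  (forall x A, A \in edges e -> lv x <> le A) /\
  (forall x, 1 <= lv x <= N) /\
  (forall A, A \in edges e -> 1 <= le A <= N) /\
  (forall x, lv x <= #|T|) /\
  exists c, forall V' E', iso_subgraph eH e V' E' ->
        \sum_(v in V') lv v + \sum_(A in E') le A = c.

Definition H_supermagic (TH : finType) (eH : rel TH) (T : finType) (e : rel T) : Prop :=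
  H_covering eH e /\ exists lv le, H_supermagic_labeling eH e lv le.

Definition C4_adj : rel 'I_4 :=
  fun i j => (j == (i.+1 %% 4) :> nat) || (i == (j.+1 %% 4) :> nat).

(* Book graph B_n: vertices inl false = u1, inl true = u2,
   inr (i,false) = v_i, inr (i,true) = w_i.
   Edges u1u2, u1w_i, u2v_i, v_iw_i. *)
Definition book_vertex (n : nat) := (bool + 'I_n * bool)%type.

Definition book_adj (n : nat) : rel (book_vertex n) :=
  fun x y => match x, y with
  | inl a, inl b => a != b
  | inl a, inr (_, c) => a != c
  | inr (_, c), inl a => a != c
  | inr (i, c), inr (j, d) => (i == j) && (c != d)
  end.

Definition copies (m : nat) (T : finType) (e : rel T) : rel ('I_m * T)%type :=
  fun p q => (p.1 == q.1) && e p.2 q.2.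

(* Main.v *)
Require Import Defs.
From mathcomp Require Import all_boot zify.
Set Implicit Arguments. Unset Strict Implicit. Unset Printing Implicit Defensive.

Definition lab (m j : nat) (o : bool) (k : nat) :=
  m * k + (if o then j else m.-1 - j) + 1.

Lemma lab_inj m j1 j2 o1 o2 k1 k2 : j1 < m -> j2 < m ->
  lab m j1 o1 k1 = lab m j2 o2 k2 -> k1 = k2 /\ (o1 = o2 -> j1 = j2).
Proof.
move=> h1 h2; rewrite /lab => e.
have r1 : (if o1 then j1 else m.-1 - j1) < m by case: (o1); lia.
have r2 : (if o2 then j2 else m.-1 - j2) < m by case: (o2); lia.
move: r1 r2 e.
set a := (if o1 then _ else _); set b := (if o2 then _ else _) => r1 r2 e.
have ek : k1 = k2 by nia.
split => // eo; subst; move: e; rewrite /a /b; case: (o2); lia.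
Qed.

Lemma lab_ge1 m j o k : 1 <= lab m j o k.
Proof. rewrite /lab; lia. Qed.

Lemma lab_le m j o k : j < m -> lab m j o k <= m * k.+1.
Proof. rewrite /lab => h; case: o; nia. Qed.

Lemma lab_lt m j1 j2 o1 o2 k1 k2 : j1 < m -> j2 < m -> k1 < k2 ->
  lab m j1 o1 k1 < lab m j2 o2 k2.
Proof. move=> h1 h2 hk; rewrite /lab; case: o1; case: o2; nia. Qed.

Definition kb n i := if i < n - n./2 then i + n./2 + ~~ odd n else i - (n - n./2).
Definition kg n i := if i < n - n./2 then n - 2 + odd n - 2 * i else 2 * n - 1 - 2 * i.
Definition kH n := if odd n then 3 * n else 2 * n + n./2.

Lemma kb_kg n i : 2 <= n -> i < n -> i + kb n i + kg n i = 3 * n./2 - ~~ odd n.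
Proof.
move=> hn hi; rewrite /kb /kg; have := odd_double_half n.
case: (odd n) => /= h; case: ifP => hq; lia.
Qed.

Notation etype n := (option ('I_n * option bool)).

Definition kV n (x : book_vertex n) : nat :=
  match x with inl false => 2*n | inl true => 2*n+1
  | inr (i,false) => i | inr (i,true) => 2*n - 1 - i end.
Definition oV n (x : book_vertex n) : bool :=
  match x with inl b => ~~ b | inr (_, c) => ~~ c end.

Lemma kV_inj n (x y : book_vertex n) : kV x = kV y -> x = y.
Proof.
case: x => [[]|[i []]]; case: y => [[]|[i' []]] //= h;
  try (have := ltn_ord i); try (have := ltn_ord i'); try lia.
all: by move=> *; congr (inr (_, _)); apply: val_inj => /=; lia.
Qed.

Lemma kV_lt n (x : book_vertex n) : kV x < 2 * n + 2.
Proof. case: x => [[]|[i []]] /=; try have := ltn_ord i; lia. Qed.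

Definition Gr m n := @copies m _ (@book_adj n).
Arguments Gr : clear implicits.

Lemma book_adj_sym n (x y : book_vertex n) : book_adj x y = book_adj y x.
Proof.
case: x => [a|[i c]]; case: y => [b|[i' d]] //=; first by rewrite eq_sym.
by rewrite [i' == i]eq_sym [d == c]eq_sym.
Qed.

Lemma Gr_sym m n (x y : 'I_m * book_vertex n) : Gr m n x y = Gr m n y x.
Proof. by rewrite /Gr /copies eq_sym book_adj_sym. Qed.

Lemma Gr_irr m n (x : 'I_m * book_vertex n) : Gr m n x x = false.
Proof. by case: x => j [a|[i c]]; rewrite /Gr /copies /= !eqxx. Qed.

Definition kE n (t : etype n) : nat :=
  match t with None => kH n | Some (i, None) => i
  | Some (i, Some false) => n + kg n i | Some (i, Some true) => 2*n + kb n i end.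
Definition oE n (t : etype n) : bool :=
  match t with None => true | Some (_, None) => true | _ => false end.

Ltac arith n := rewrite /kb /kg /kH; have := odd_double_half n;
  case: (odd n) => /= ?; repeat case: ifP => ?; lia.

Lemma kE_inj n (t1 t2 : etype n) : 2 <= n -> kE t1 = kE t2 -> t1 = t2.
Proof.
move=> hn.
case: t1 => [[i1 [[]|]]|]; case: t2 => [[i2 [[]|]]|] //= e;
  try (have := ltn_ord i1); try (have := ltn_ord i2); move=> *;
  first [ (exfalso; move: e; arith n)
        | (congr (Some (_, _)); apply: val_inj; move: e; arith n) ].
Qed.

Lemma kE_lt n (t : etype n) : 2 <= n -> kE t < 3 * n + 1.
Proof. move=> hn; case: t => [[i [[]|]]|] /=; try have := ltn_ord i; move=> *; arith n. Qed.

Definition Lt m n (j : 'I_m) (t : etype n) := lab m j (oE t) (2*n+2 + kE t).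

Definition Eset m n (j : 'I_m) (t : etype n) : {set 'I_m * book_vertex n} :=
  match t with
  | None => [set (j, inl false); (j, inl true)]
  | Some (i, None) => [set (j, inl true); (j, inr (i,false))]
  | Some (i, Some false) => [set (j, inr (i,false)); (j, inr (i,true))]
  | Some (i, Some true) => [set (j, inr (i,true)); (j, inl false)]
  end.

Definition bw m n (j : 'I_m) (x y : book_vertex n) : nat :=
  match x, y with
  | inl false, inl true => @Lt m n j None
  | inl true, inr (i, false) => Lt j (Some (i, None))
  | inr (i, false), inr (i', true) => if i == i' then Lt j (Some (i, Some false)) else 0
  | inr (i, true), inl false => Lt j (Some (i, Some true))
  | _, _ => 0 end.

Definition ew m n (x y : 'I_m * book_vertex n) : nat :=
  if x.1 == y.1 then bw x.1 x.2 y.2 else 0.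

Definition le m n (A : {set 'I_m * book_vertex n}) : nat :=
  \sum_(x in A) \sum_(y in A) ew x y.

Lemma sum_set2 (T : finType) (a b : T) (F : T -> nat) :
  a != b -> \sum_(x in [set a; b]) F x = F a + F b.
Proof. by move=> h; rewrite big_setU1 ?big_set1 // inE. Qed.

Lemma ew_diag m n (x : 'I_m * book_vertex n) : ew x x = 0.
Proof. by case: x => j [[]|[i []]]; rewrite /ew /= eqxx. Qed.

Lemma le_set2 m n (x y : 'I_m * book_vertex n) : x != y ->
  le [set x; y] = ew x y + ew y x.
Proof.
move=> h; rewrite /le sum_set2 // !sum_set2 // !ew_diag; lia.
Qed.

Lemma le_Eset m n (j : 'I_m) (t : etype n) : le (Eset j t) = Lt j t.
Proof.
case: t => [[i [[]|]]|]; rewrite /= le_set2 ?xpair_eqE ?eqxx //=.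
all: try by apply/negP => /eqP [].
all: by rewrite /ew /= !eqxx ?addn0.
Qed.

Lemma edge_class m n (A : {set 'I_m * book_vertex n}) :
  A \in edges (Gr m n) -> exists j (t : etype n), A = Eset j t.
Proof.
rewrite inE => /existsP [[j1 bx] /existsP [[j2 by_] /andP [hxy /eqP ->]]].
move: hxy; rewrite /Gr /copies /= => /andP [/eqP <- hb]; exists j1.
move: hb; case: bx => [[]|[i []]]; case: by_ => [[]|[i' []]] //= hb.
- by exists None; rewrite /= setUC.
- by exists (Some (i', None)).
- by exists None.
- by exists (Some (i', Some true)); rewrite /= setUC.
- by exists (Some (i, Some true)).
- by rewrite andbF in hb.
- by move: hb; rewrite andbT => /eqP <-; exists (Some (i, Some false)); rewrite /= setUC.
- by exists (Some (i, None)); rewrite /= setUC.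
- by move: hb; rewrite andbT => /eqP <-; exists (Some (i, Some false)).
- by rewrite andbF in hb.
Qed.

Lemma Eset_edge m n (j : 'I_m) (t : etype n) : Eset j t \in edges (Gr m n).
Proof.
rewrite inE; case: t => [[i [[]|]]|].
- by apply/existsP; exists (j, inr (i, true)); apply/existsP; exists (j, inl false);
  rewrite /Gr /copies /= !eqxx.
- by apply/existsP; exists (j, inr (i, false)); apply/existsP; exists (j, inr (i, true));
  rewrite /Gr /copies /= !eqxx.
- by apply/existsP; exists (j, inl true); apply/existsP; exists (j, inr (i, false));
  rewrite /Gr /copies /= !eqxx.
- by apply/existsP; exists (j, inl false); apply/existsP; exists (j, inl true);
  rewrite /Gr /copies /= !eqxx.
Qed.

Lemma Lt_inj m n (j1 j2 : 'I_m) (t1 t2 : etype n) : 2 <= n ->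
  Lt j1 t1 = Lt j2 t2 -> j1 = j2 /\ t1 = t2.
Proof.
move=> hn; rewrite /Lt => /lab_inj [] // hk hj.
have et : t1 = t2 by apply: kE_inj => //; lia.
by split => //; apply: val_inj; apply: hj; rewrite et.
Qed.

Lemma le_inj m n : 2 <= n -> {in edges (Gr m n) &, injective (@le m n)}.
Proof.
move=> hn A B /edge_class [j1 [t1 ->]] /edge_class [j2 [t2 ->]].
by rewrite !le_Eset => /Lt_inj [] // -> ->.
Qed.

Definition lv m n (x : 'I_m * book_vertex n) : nat := lab m x.1 (oV x.2) (kV x.2).

Lemma lv_inj m n : injective (@lv m n).
Proof.
move=> [j1 x1] [j2 x2]; rewrite /lv /= => /lab_inj [] // /kV_inj e; subst x2 => hj.
by rewrite (val_inj (hj erefl)).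
Qed.

Lemma card_T m n : #|{: 'I_m * book_vertex n}| = m * (2 * n + 2).
Proof. rewrite card_prod card_sum card_bool card_prod !card_ord card_bool; congr (_ * _); lia. Qed.

Lemma card_edges m n : 2 <= n -> m * (3 * n + 1) <= #|edges (Gr m n)|.
Proof.
move=> hn.
pose f := fun p : 'I_m * etype n => Eset p.1 p.2.
have fi : injective f.
  move=> [j1 t1] [j2 t2]; rewrite /f /= => e.
  by have [-> ->] := Lt_inj hn (etrans (esym (le_Eset j1 t1)) (etrans (congr1 (@le m n) e) (le_Eset j2 t2))).
have : f @: [set: 'I_m * etype n] \subset edges (Gr m n).
  by apply/subsetP => A /imsetP [[j t] _ ->]; apply: Eset_edge.
move/subset_leq_card; rewrite card_imset // cardsT card_prod card_option card_prod !card_ord card_option card_bool.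
by rewrite [n * 3]mulnC addn1.
Qed.

Definition Sb n (k : 'I_n) (y : book_vertex n) : bool :=
  match y with inl _ => true | inr (k', _) => k' == k end.

Lemma nbr_inr n (k : 'I_n) c y : book_adj (inr (k, c)) y -> Sb k y.
Proof. by case: y => [a|[k' d]] //= /andP [/eqP ->]. Qed.

Lemma two_nbrs n (k : 'I_n) y x1 x2 : book_adj y x1 -> book_adj y x2 ->
  Sb k x1 -> Sb k x2 -> x1 != x2 -> Sb k y.
Proof.
case: y => [a|[k' c]] //=.
case: x1 => [a1|[k1 c1]]; last by move=> /andP [/eqP ->].
case: x2 => [a2|[k2 c2]]; last by move=> _ /andP [/eqP ->].
by case: a1 a2 c => [] [] [].
Qed.

Lemma cyc_book n (b0 b1 b2 b3 : book_vertex n) :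
  book_adj b0 b1 -> book_adj b1 b2 -> book_adj b2 b3 -> book_adj b3 b0 ->
  b0 != b2 -> b1 != b3 -> exists k, [&& Sb k b0, Sb k b1, Sb k b2 & Sb k b3].
Proof.
have key : forall (k : 'I_n) c c1 c2 c3, book_adj (inr (k, c)) c1 -> book_adj c1 c2 ->
    book_adj c2 c3 -> book_adj c3 (inr (k, c)) -> c1 != c3 ->
    [&& Sb k c1, Sb k c2 & Sb k c3].
  move=> k c c1 c2 c3 h1 h2 h3 h4 h13.
  have s1 := nbr_inr h1.
  have s3 : Sb k c3 by apply: (nbr_inr (c := c)); rewrite book_adj_sym.
  rewrite s1 s3 andbT /=.
  by apply: (two_nbrs (x1 := c1) (x2 := c3)) => //; rewrite book_adj_sym.
move=> h01 h12 h23 h30 h02 h13.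
case E0: b0 => [a0|[k c]].
- case E1: b1 => [a1|[k c]].
  + case E2: b2 => [a2|[k c]].
    * case E3: b3 => [a3|[k c]].
      - exfalso; move: h01 h12 h02; rewrite E0 E1 E2 /=.
        by clear E0 E1 E2 E3; case: a0 a1 a2 => [] [] [].
      - exists k; rewrite -E0 -E1 -E2 -E3.
        have := key k c b0 b1 b2; rewrite -E3 => /(_ h30 h01 h12 h23).
        move=> /(_ h02) /and3P [-> -> ->]; by rewrite E3 /= eqxx.
    * exists k; rewrite -E0 -E1 -E2.
      have := key k c b3 b0 b1; rewrite -E2 => /(_ h23 h30 h01 h12 _).
      rewrite eq_sym => /(_ h13) /and3P [-> -> ->]; by rewrite E2 /= eqxx.
  + exists k; rewrite -E0 -E1.
    have := key k c b2 b3 b0; rewrite -E1 => /(_ h12 h23 h30 h01 _).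
    rewrite eq_sym => /(_ h02) /and3P [-> -> ->]; by rewrite E1 /= eqxx.
- exists k; rewrite -E0.
  have := key k c b1 b2 b3; rewrite -E0 => /(_ h01 h12 h23 h30 h13).
  by case/and3P => -> -> ->; rewrite E0 /= eqxx.
Qed.

Definition S m n (j : 'I_m) (k : 'I_n) : {set 'I_m * book_vertex n} :=
  [set x | (x.1 == j) && Sb k x.2].

Lemma cyc_T m n (a0 a1 a2 a3 : 'I_m * book_vertex n) :
  Gr m n a0 a1 -> Gr m n a1 a2 -> Gr m n a2 a3 -> Gr m n a3 a0 ->
  a0 != a2 -> a1 != a3 ->
  exists j k, [/\ a0 \in S j k, a1 \in S j k, a2 \in S j k & a3 \in S j k].
Proof.
case: a0 a1 a2 a3 => [j0 b0] [j1 b1] [j2 b2] [j3 b3].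
rewrite /Gr /copies /= => /andP [/eqP e01 h01] /andP [/eqP e12 h12]
  /andP [/eqP e23 h23] /andP [_ h30].
subst j1 j2 j3; rewrite !xpair_eqE eqxx /= => h02 h13.
have [k /and4P [s0 s1 s2 s3]] := cyc_book h01 h12 h23 h30 h02 h13.
by exists j0, k; rewrite !inE /= eqxx s0 s1 s2 s3.
Qed.

Lemma inr_eq (A B : eqType) (x y : B) : (@inr A B x == inr y) = (x == y).
Proof. by apply/eqP/eqP => [[]|->]. Qed.

Lemma inl_eq (A B : eqType) (x y : A) : (@inl A B x == inl y) = (x == y).
Proof. by apply/eqP/eqP => [[]|->]. Qed.

Lemma some_eq (A : eqType) (x y : A) : (Some x == Some y) = (x == y).
Proof. by apply/eqP/eqP => [[]|->]. Qed.

Lemma S_eq m n (j : 'I_m) (k : 'I_n) :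
  S j k = [set (j, inl false); (j, inl true); (j, inr (k, false)); (j, inr (k, true))].
Proof.
apply/setP => [[j' x]]; rewrite !inE !xpair_eqE /=.
case: (j' == j); rewrite /= ?andbF //.
by case: x => [[]|[k' []]] //=; rewrite !inr_eq !xpair_eqE /= ?andbT ?andbF ?orbF.
Qed.

Lemma sum_set4 (T : finType) (a b c d : T) (F : T -> nat) :
  a \notin [set b; c; d] -> b \notin [set c; d] -> c != d ->
  \sum_(x in [set a; b; c; d]) F x = F a + F b + F c + F d.
Proof.
move=> ha hb hc.
have -> : [set a; b; c; d] = a |: (b |: (c |: [set d])) by rewrite !setUA.
rewrite big_setU1; last by move: ha; rewrite !inE !negb_or -!andbA.
rewrite big_setU1; last by move: hb; rewrite !inE.
by rewrite big_setU1 ?inE // big_set1 /= !addnA.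
Qed.

Lemma card_set4 (T : finType) (a b c d : T) : #|[set a; b; c; d]| <= 4.
Proof.
have -> : [set a; b; c; d] = a |: (b |: (c |: [set d])) by rewrite !setUA.
rewrite !cardsU1 cards1; lia.
Qed.

Definition TS n (k : 'I_n) : {set etype n} :=
  [set None; Some (k, None); Some (k, Some false); Some (k, Some true)].

Definition ES m n (j : 'I_m) (k : 'I_n) : {set {set 'I_m * book_vertex n}} :=
  [set Eset j t | t in TS k].

Lemma card_ES m n (j : 'I_m) (k : 'I_n) : #|ES j k| <= 4.
Proof. exact: leq_trans (leq_imset_card _ _) (card_set4 _ _ _ _). Qed.

Lemma Eset_inj m n (j : 'I_m) : 2 <= n -> injective (@Eset m n j).
Proof.
move=> hn t1 t2 e.
by have [_ ->] := Lt_inj hn (etrans (esym (le_Eset j t1)) (etrans (congr1 (@le m n) e) (le_Eset j t2))).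
Qed.

Lemma edge_in_S m n (j : 'I_m) (k : 'I_n) A :
  A \in edges (Gr m n) -> A \subset S j k -> A \in ES j k.
Proof.
move=> /edge_class [j' [t ->]] /subsetP sub.
suff [-> ht] : j' = j /\ t \in TS k by apply: imset_f.
case: t sub => [[i c]|] /= sub.
- have [b hb] : exists b, (j', inr (i, b)) \in Eset j' (Some (i, c)).
    by case: c sub => [[]|] _; [exists true | exists false | exists false];
      rewrite /= !inE eqxx ?orbT.
  have := sub _ hb; rewrite inE /= => /andP [/eqP -> /eqP ->]; split => //.
  by case: c {sub hb} => [[]|]; rewrite !inE eqxx ?orbT.
- have : (j', inl false) \in S j k by apply: sub; rewrite !inE eqxx.
  by rewrite inE /= => /andP [/eqP -> _]; split => //; rewrite !inE eqxx.
Qed.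

Definition cst m n := m * (6 * n + 4 * (2 * n + 2) + kH n + 3 * n + (3 * n./2 - ~~ odd n))
  + 4 * m.-1 + 8.

Lemma weight m n (j : 'I_m) (k : 'I_n) : 2 <= n ->
  \sum_(v in S j k) lv v + \sum_(A in ES j k) le A = cst m n.
Proof.
move=> hn.
rewrite S_eq sum_set4; first last.
all: try by rewrite ?inE !xpair_eqE ?eqxx /= ?inr_eq ?inl_eq ?xpair_eqE ?eqxx.
rewrite /ES big_imset /=; last by move=> t1 t2 _ _; apply: Eset_inj.
rewrite /TS sum_set4; first last.
all: try by rewrite ?inE /= ?some_eq ?xpair_eqE ?eqxx ?some_eq.
rewrite !le_Eset /lv /Lt /lab /= /cst.
have hk := ltn_ord k; have hj := ltn_ord j.
have e := kb_kg hn hk.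
set w := 2 * n - 1 - k.
have ew : k + w = 2 * n - 1 by rewrite /w; lia.
have -> : 6 * n + 4 * (2 * n + 2) + kH n + 3 * n + (3 * n./2 - ~~ odd n) =
  2 * n + (2 * n + 1) + k + w + (2 * n + 2 + kH n) + (2 * n + 2 + k) +
  (2 * n + 2 + (n + kg n k)) + (2 * n + 2 + (2 * n + kb n k)) by lia.
rewrite !mulnDr; lia.
Qed.

Definition i0 : 'I_4 := @Ordinal 4 0 erefl.
Definition i1 : 'I_4 := @Ordinal 4 1 erefl.
Definition i2 : 'I_4 := @Ordinal 4 2 erefl.
Definition i3 : 'I_4 := @Ordinal 4 3 erefl.

Lemma ord4_ind (P : 'I_4 -> Prop) : P i0 -> P i1 -> P i2 -> P i3 -> forall i, P i.
Proof.
move=> h0 h1 h2 h3 [[|[|[|[|i]]]] hi] //.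
- by rewrite (bool_irrelevance hi (erefl true)).
- by rewrite (bool_irrelevance hi (erefl true)).
- by rewrite (bool_irrelevance hi (erefl true)).
- by rewrite (bool_irrelevance hi (erefl true)).
Qed.

Lemma C4_irr (a : 'I_4) : C4_adj a a = false.
Proof. by elim/ord4_ind: a. Qed.


Lemma C4_edge (a b : 'I_4) : C4_adj a b -> [set a; b] \in edges C4_adj.
Proof. by move=> h; rewrite inE; apply/existsP; exists a; apply/existsP; exists b; rewrite h eqxx. Qed.

Lemma card_C4 : 4 <= #|edges C4_adj|.
Proof.
have : [set [set i0; i1]; [set i1; i2]; [set i2; i3]; [set i3; i0]] \subset edges C4_adj.
  apply/subsetP => A hA; rewrite !inE -!orbA in hA.
  by case/or4P: hA => /eqP ->; apply: C4_edge.
move/subset_leq_card; apply: leq_trans.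
have -> : [set [set i0; i1]; [set i1; i2]; [set i2; i3]; [set i3; i0]] =
  [set i0; i1] |: ([set i1; i2] |: ([set i2; i3] |: [set [set i3; i0]])) by rewrite !setUA.
have sn : forall (A B : {set 'I_4}) x, x \in A -> x \notin B -> (A == B) = false.
  by move=> A B x hA hB; apply/eqP => eAB; move: hB; rewrite -eAB hA.
rewrite !cardsU1 cards1 !inE.
rewrite (sn [set i0; i1] [set i1; i2] i0) ?(sn [set i0; i1] [set i2; i3] i0)
  ?(sn [set i0; i1] [set i3; i0] i1) ?(sn [set i1; i2] [set i2; i3] i1)
  ?(sn [set i1; i2] [set i3; i0] i1) ?(sn [set i2; i3] [set i3; i0] i2) //.
all: by rewrite !inE.
Qed.

Lemma imset2 (aT rT : finType) (f : aT -> rT) a b : f @: [set a; b] = [set f a; f b].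
Proof. by rewrite imsetU1 imset_set1. Qed.

Lemma edge2adj m n (x y : 'I_m * book_vertex n) :
  [set x; y] \in edges (Gr m n) -> x != y -> Gr m n x y.
Proof.
rewrite inE => /existsP [x' /existsP [y' /andP [h /eqP e]]] nxy.
have hx : x \in [set x'; y'] by rewrite -e !inE eqxx.
have hy : y \in [set x'; y'] by rewrite -e !inE eqxx orbT.
move: hx hy nxy; rewrite !inE => /orP [] /eqP -> /orP [] /eqP ->;
  rewrite ?eqxx // => _; by rewrite Gr_sym.
Qed.

Lemma magic m n V' E' : 2 <= n -> iso_subgraph C4_adj (Gr m n) V' E' ->
  \sum_(v in V') lv v + \sum_(A in E') le A = cst m n.
Proof.
move=> hn [sub [phi [phi_inj [eV eE]]]].
have adj : forall a b, C4_adj a b -> Gr m n (phi a) (phi b).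
  move=> a b hab; apply: edge2adj; last first.
    by rewrite (inj_eq phi_inj); apply/eqP => eab; move: hab; rewrite eab C4_irr.
  rewrite -imset2; apply: (subsetP sub); rewrite eE.
  by apply/imsetP; exists [set a; b] => //; apply: C4_edge.
have ne : forall a b, a != b -> phi a != phi b by move=> a b; rewrite (inj_eq phi_inj).
have [j [k [s0 s1 s2 s3]]] := cyc_T (adj i0 i1 erefl) (adj i1 i2 erefl)
  (adj i2 i3 erefl) (adj i3 i0 erefl) (ne i0 i2 erefl) (ne i1 i3 erefl).
have allS : forall i, phi i \in S j k by elim/ord4_ind.
have eV' : V' = S j k.
  apply/eqP; rewrite eqEcard; apply/andP; split.
    by rewrite eV; apply/subsetP => x /imsetP [i _ ->].
  rewrite eV card_imset // cardsT card_ord S_eq; exact: card_set4.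
have eE' : E' = ES j k.
  apply/eqP; rewrite eqEcard; apply/andP; split.
    apply/subsetP => A hA; apply: edge_in_S; first exact: (subsetP sub).
    move: hA; rewrite eE -eV' eV => /imsetP [B _ ->]; exact: imsetS (subsetT B).
  rewrite eE (card_imset _ (imset_inj phi_inj)).
  exact: leq_trans (card_ES j k) card_C4.
by rewrite eV' eE'; apply: weight.
Qed.

Definition phiK m n (j : 'I_m) (k : 'I_n) (i : 'I_4) : 'I_m * book_vertex n :=
  match val i with 0 => (j, inl false) | 1 => (j, inl true)
  | 2 => (j, inr (k, false)) | _ => (j, inr (k, true)) end.

Lemma phiK_inj m n (j : 'I_m) (k : 'I_n) : injective (phiK j k).
Proof.
move=> a b; elim/ord4_ind: a; elim/ord4_ind: b => //=; rewrite /phiK /=;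
  move=> h; inversion h.
Qed.

Lemma phiK_adj m n (j : 'I_m) (k : 'I_n) a b : C4_adj a b -> Gr m n (phiK j k a) (phiK j k b).
Proof.
elim/ord4_ind: a; elim/ord4_ind: b => //= _; rewrite /phiK /Gr /copies /= ?eqxx //.
Qed.

Lemma iso_phiK m n (j : 'I_m) (k : 'I_n) :
  iso_subgraph C4_adj (Gr m n) (phiK j k @: setT) ((fun A : {set 'I_4} => phiK j k @: A) @: edges C4_adj).
Proof.
split; last by exists (phiK j k); split; [exact: phiK_inj | split].
apply/subsetP => A /imsetP [B /[dup] hB].
rewrite inE => /existsP [a /existsP [b /andP [hab /eqP ->]]] ->.
rewrite imset2 inE; apply/existsP; exists (phiK j k a); apply/existsP; exists (phiK j k b).
by rewrite phiK_adj ?eqxx.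
Qed.

Lemma covering m n : 0 < n -> H_covering C4_adj (Gr m n).
Proof.
move=> hn A /edge_class [j [t ->]].
pose k0 : 'I_n := Ordinal hn.
pose k := match t with Some (i, _) => i | None => k0 end.
exists (phiK j k @: setT), ((fun B : {set 'I_4} => phiK j k @: B) @: edges C4_adj); split.
  exact: iso_phiK.
apply/imsetP.
case: t @k => [[i [[]|]]|] k /=.
- by exists [set i3; i0]; [apply: C4_edge | rewrite imset2].
- by exists [set i2; i3]; [apply: C4_edge | rewrite imset2].
- by exists [set i1; i2]; [apply: C4_edge | rewrite imset2].
- by exists [set i0; i1]; [apply: C4_edge | rewrite imset2].
Qed.

Theorem theorem7 (m n : nat) : 2 <= m -> 2 <= n ->
  H_supermagic C4_adj (@copies m _ (@book_adj n)).
Proof.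
move=> hm hn.
change (H_supermagic C4_adj (Gr m n)).
have hn0 : 0 < n by lia.
split; first exact: (@covering m n hn0).
exists (@lv m n), (@le m n).
have cT := card_T m n.
have cE := card_edges m hn.
have lvb : forall x : 'I_m * book_vertex n, lv x <= m * (2 * n + 2).
  move=> [j x]; rewrite /lv /=; apply: leq_trans (lab_le _ _ (ltn_ord j)) _.
  by rewrite leq_mul2l (kV_lt x) orbT.
have leb : forall A, A \in edges (Gr m n) -> 1 <= le A <= m * (2 * n + 2) + m * (3 * n + 1).
  move=> A /edge_class [j [t ->]]; rewrite le_Eset /Lt lab_ge1 /=.
  apply: leq_trans (lab_le _ _ (ltn_ord j)) _.
  rewrite -mulnDr leq_mul2l; have := kE_lt t hn; lia.
split; first exact: lv_inj.
split; first exact: le_inj.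
split.
  move=> [j x] A /edge_class [j' [t ->]]; rewrite le_Eset /Lt /lv /=.
  apply/eqP; rewrite neq_ltn; apply/orP; left.
  by apply: lab_lt => //; have := kV_lt x; lia.
split.
  move=> x; rewrite lab_ge1 /=; have := lvb x; rewrite cT; lia.
split.
  move=> A hA; have := leb A hA; rewrite cT; lia.
split.
  move=> x; rewrite cT; exact: lvb.
exists (cst m n) => V' E' h; exact: magic hn h.
Qed.
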